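(* Let $G$ be a finite directed multigraph and let $c:\mathcal M_G\to\mathbb R$ be an additive map such that $c(\mathcal C)>-|\mathcal C|$ for every simple directed cycle $\mathcal C$ of $G$. Then $c$ extends to an additive map $c:\mathbb Z^{E(G)}\to\mathbb R$ with $c(e)>-1$ for every $e\in E(G)$.
   Context: Elements of $\mathbb Z^{E(G)}$ are formal sums $\sum_{e\in E(G)}m_e\,e$. A simple directed cycle $\mathcal C$ is identified with the formal sum $\sum_{e\in\mathcal C}e$, and $|\mathcal C|$ is its number of edges. $\mathcal M_G\subseteq\mathbb Z^{E(G)}$ is the $\mathbb Z$-submodule generated by all simple directed cycles of $G$. *)

(* Defs.v *)
From HB Require Import structures.
From mathcomp Require Import all_boot all_order all_algebra.
Set Implicit Arguments. Unset Strict Implicit. Unset Printing Implicit Defensive.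
Import Order.TTheory GRing.Theory Num.Theory.
Local Open Scope ring_scope.

(* A finite directed multigraph: finite vertex type V, finite edge type E,
   with source and target maps (parallel edges and loops allowed). *)

(* A simple directed cycle, given as the nonempty list of its edges
   [e_1; ...; e_k] in cyclic order: tgt e_i = src e_(i+1) (indices mod k),
   and the vertices src e_1, ..., src e_k are pairwise distinct
   (hence so are the edges). *)
Definition simple_cycle (V E : finType) (src tgt : E -> V) (s : seq E) : bool :=
  [&& s != [::], path.cycle (fun e f => tgt e == src f) s & uniq (map src s)].

Definition cycle_vec (E : finType) (s : seq E) : {ffun E -> int} :=
  [ffun e => ((e \in s) : nat)%:Z].

(* Membership in M_G: the Z-submodule of Z^{E(G)} generated by the simple
   directed cycles, i.e. finite Z-linear combinations of them. *)
Definition in_MG (V E : finType) (src tgt : E -> V) (x : {ffun E -> int}) : Prop :=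
  exists l : seq (int * seq E),
    all (fun p => simple_cycle src tgt p.2) l /\
    x = \sum_(p <- l) (cycle_vec p.2 *~ p.1).

(* Main.v *)
Require Import Defs.
From HB Require Import structures.
From mathcomp Require Import all_boot all_order all_algebra.
From mathcomp Require Import lra zify.
Import Order.TTheory GRing.Theory Num.Theory.
Set Implicit Arguments. Unset Strict Implicit. Unset Printing Implicit Defensive.
Local Open Scope ring_scope.

Section Walks.
Variables (V E : finType) (src tgt : E -> V).

Fixpoint walk (x : V) (s : seq E) (y : V) : bool :=
  if s is e :: s' then (src e == x) && walk (tgt e) s' y else x == y.

Lemma walk_catP x s1 s2 y :
  walk x (s1 ++ s2) y <-> exists z, walk x s1 z && walk z s2 y.
Proof.
elim: s1 x => [|e s1 IH] x /=.
  split; first by move=> H; exists x; rewrite eqxx.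
  by case=> z /andP[/eqP-> ].
split.
  case/andP=> He /IH[z Hz]; exists z; by rewrite He.
case=> z /andP[/andP[He H1] H2]; rewrite He /=; apply/IH; exists z; by rewrite H1.
Qed.

Lemma walk_nth x s y i e0 : walk x s y -> (i < size s)%N ->
  walk x (take i s) (src (nth e0 s i)) && walk (src (nth e0 s i)) (drop i s) y.
Proof.
move=> W Hi; move: W; rewrite -{1}(cat_take_drop i s) => /walk_catP[z /andP[W1 W2]].
have W2' := W2; rewrite (drop_nth e0 Hi) /= in W2'; case/andP: W2' => /eqP Hz _.
by rewrite Hz W1 W2.
Qed.

Lemma walk_cut x s y : walk x s y -> ~~ uniq (map src s) ->
  exists A B C z, [/\ s = A ++ B ++ C, walk x (A ++ C) y, walk z B z,
     (0 < size B)%N & (size B < size s)%N].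
Proof.
case: s => [|e0 s'] W; first by [].
set s := e0 :: s' in W *.
move/(uniqPn (src e0)) => [i [j [lij]]]; rewrite size_map => ljs.
have lis : (i < size s)%N by apply: ltn_trans ljs.
rewrite !(nth_map e0) // => Heq.
have /andP[W1 W2] := walk_nth e0 W lis.
have hd : (j - i < size (drop i s))%N by rewrite size_drop ltn_sub2r.
have /andP[W3 W4] := walk_nth e0 W2 hd.
rewrite nth_drop subnKC ?(ltnW lij) // drop_drop subnK ?(ltnW lij) // in W3 W4.
exists (take i s), (take (j - i) (drop i s)), (drop j s), (src (nth e0 s i)).
split.
- by rewrite -{1}(cat_take_drop i s) -{1}(cat_take_drop (j - i) (drop i s)) drop_drop subnK ?(ltnW lij).
- apply/walk_catP; exists (src (nth e0 s i)); by rewrite W1 Heq.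
- by rewrite -Heq in W3.
- by rewrite size_takel ?subn_gt0 // ltnW.
- rewrite size_takel; last by apply: ltnW.
  by apply: leq_ltn_trans (leq_subr _ _) ljs.
Qed.


Definition wvec (s : seq E) : {ffun E -> int} := [ffun e => (count_mem e s)%:Z].

Lemma wvec_cat s1 s2 : wvec (s1 ++ s2) = wvec s1 + wvec s2.
Proof. by apply/ffunP => e; rewrite !ffunE count_cat PoszD. Qed.

Lemma wvec_nil : wvec [::] = 0.
Proof. by apply/ffunP => e; rewrite !ffunE. Qed.

Lemma wvec_uniq s : uniq s -> wvec s = cycle_vec s.
Proof. by move=> u; apply/ffunP => e; rewrite !ffunE count_uniq_mem. Qed.

Notation MG := (in_MG src tgt).

Lemma MG0 : MG 0.
Proof. by exists [::]; rewrite big_nil. Qed.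

Lemma MGD x y : MG x -> MG y -> MG (x + y).
Proof.
move=> [l1 [H1 ->]] [l2 [H2 ->]]; exists (l1 ++ l2).
by rewrite all_cat H1 H2 big_cat.
Qed.

Lemma MGN x : MG x -> MG (- x).
Proof.
move=> [l [H ->]]; exists [seq (- p.1, p.2) | p <- l]; split.
  by rewrite all_map.
by rewrite big_map -sumrN; apply: eq_bigr => p _; rewrite mulrNz.
Qed.

Lemma MGcyc s : simple_cycle src tgt s -> MG (cycle_vec s).
Proof. by move=> H; exists [:: (1, s)]; rewrite /= H big_seq1 mulr1z. Qed.

Lemma MGsum (I : eqType) (l : seq I) (F : I -> {ffun E -> int}) :
  (forall i, i \in l -> MG (F i)) -> MG (\sum_(i <- l) F i).
Proof.
elim: l => [|i l IH] H; first by rewrite big_nil; exact: MG0.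
rewrite big_cons; apply: MGD; first by apply: H; rewrite mem_head.
by apply: IH => j Hj; apply: H; rewrite in_cons Hj orbT.
Qed.

Lemma MGnat x n : MG x -> MG (x *+ n).
Proof. by move=> H; elim: n => [|n IH]; [rewrite mulr0n; exact: MG0 | rewrite mulrS; exact: MGD]. Qed.

Lemma MGz x n : MG x -> MG (x *~ n).
Proof. case: n => n H; first by rewrite -pmulrn; exact: MGnat.
by rewrite NegzE mulrNz; apply: MGN; rewrite -pmulrn; exact: MGnat. Qed.

Section Add.
Variable R : realFieldType.
Variable g : {ffun E -> int} -> R.
Hypothesis gadd : forall x y, MG x -> MG y -> g (x + y) = g x + g y.

Lemma g0 : g 0 = 0.
Proof. have := gadd MG0 MG0; rewrite addr0 => H; lra. Qed.

Lemma gN x : MG x -> g (- x) = - g x.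
Proof. move=> H; have := gadd H (MGN H); rewrite subrr g0 => H'; lra. Qed.

Lemma gnat x n : MG x -> g (x *+ n) = g x *+ n.
Proof.
move=> H; elim: n => [|n IH]; first by rewrite !mulr0n g0.
rewrite !mulrS gadd ?IH //; exact: MGnat.
Qed.

Lemma gz x n : MG x -> g (x *~ n) = g x *~ n.
Proof.
move=> H; case: n => n; first by rewrite -!pmulrn gnat.
rewrite !NegzE !mulrNz gN -?pmulrn ?gnat //; exact: MGnat.
Qed.

Lemma gsum (I : eqType) (l : seq I) (F : I -> {ffun E -> int}) :
  (forall i, i \in l -> MG (F i)) -> g (\sum_(i <- l) F i) = \sum_(i <- l) g (F i).
Proof.
elim: l => [|i l IH] H; first by rewrite !big_nil g0.
have Hl : forall j, j \in l -> MG (F j) by move=> j Hj; apply: H; rewrite in_cons Hj orbT.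
rewrite !big_cons gadd ?IH //; first by apply: H; rewrite mem_head.
exact: MGsum.
Qed.

End Add.

Definition prel := fun e f : E => tgt e == src f.

Lemma path_walk e s f : path prel e (rcons s f) = walk (tgt e) s (src f).
Proof.
elim: s e => [|g s IH] e /=; first by rewrite andbT.
by rewrite IH /prel eq_sym.
Qed.

Lemma simple_walk s : simple_cycle src tgt s ->
  exists e s', [/\ s = e :: s', walk (src e) s (src e) & uniq (map src s)].
Proof.
case: s => [|e s] /and3P[// _ Hc Hu]; exists e, s; split => //.
by rewrite /= eqxx /=; rewrite /path.cycle -/prel path_walk in Hc.
Qed.

Lemma walk_simple x s : walk x s x -> s != [::] -> uniq (map src s) ->
  simple_cycle src tgt s.
Proof.
case: s => [|e s] //= /andP[/eqP He W] _ Hu.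
by rewrite /simple_cycle /= Hu andbT /path.cycle -/prel path_walk He.
Qed.

Lemma uniq_size_V (l : seq V) : uniq l -> (size l <= #|V|)%N.
Proof. by move/card_uniqP <-; apply: max_card. Qed.

Lemma walk_cw x s : walk x s x -> exists L : seq (seq E),
  (forall C, C \in L -> simple_cycle src tgt C) /\ wvec s = \sum_(C <- L) cycle_vec C.
Proof.
move: {2}(size s) (leqnn (size s)) => n; elim: n x s => [|n IH] x s.
  rewrite leqn0 => /nilP -> _; exists [::]; by rewrite big_nil wvec_nil.
move=> Hs W.
case: (boolP (uniq (map src s))) => Hu.
  case: (altP (s =P [::])) => Hn.
    by exists [::]; rewrite Hn big_nil wvec_nil.
  exists [:: s]; split; first by move=> C; rewrite inE => /eqP ->; apply: walk_simple W Hn Hu.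
  by rewrite big_seq1 wvec_uniq // (map_uniq Hu).
have [A [B [C [z [Hs' W1 W2 H0 H1]]]]] := walk_cut W Hu.
have HAC : (size (A ++ C) <= n)%N.
  move: Hs; rewrite Hs' !size_cat => Hs; rewrite -ltnS; apply: leq_trans Hs; lia.
have HB : (size B <= n)%N by rewrite -ltnS; apply: leq_trans Hs.
have [L1 [HL1 E1]] := IH _ _ HAC W1.
have [L2 [HL2 E2]] := IH _ _ HB W2.
exists (L1 ++ L2); split.
  by move=> D; rewrite mem_cat => /orP[/HL1|/HL2].
by rewrite big_cat -E1 -E2 Hs' !wvec_cat [wvec B + _]addrC addrA.
Qed.

Lemma cw_MG x s : walk x s x -> MG (wvec s).
Proof.
move/walk_cw => [L [HL ->]]; apply: MGsum => C HC; exact: MGcyc (HL _ HC).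
Qed.


Definition adj := fun x y : V => [exists e, (src e == x) && (tgt e == y)].

Lemma walk_conn x s y : walk x s y -> connect adj x y.
Proof.
elim: s x => [|e s IH] x /=; first by move/eqP->; exact: connect0.
case/andP=> /eqP He /IH H; apply: connect_trans H; apply: connect1.
by apply/existsP; exists e; rewrite He !eqxx.
Qed.

Lemma conn_walk x y : connect adj x y -> exists s, walk x s y.
Proof.
case/connectP=> p; elim: p x => [|z p IH] x /=; first by move=> _ ->; exists [::]; rewrite /= eqxx.
case/andP=> /existsP[e /andP[/eqP H1 /eqP H2]] Hp Hy.
have [s Hs] := IH _ Hp Hy; exists (e :: s); by rewrite /= H1 eqxx H2.
Qed.

Lemma walk_mem x s y e : walk x s y -> e \in s ->
  connect adj x (src e) /\ connect adj (tgt e) y.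
Proof.
move=> W Hin; case/splitPr: Hin W => p1 p2 /walk_catP[z /andP[W1 /= /andP[/eqP He W2]]].
by split; [rewrite He; exact: walk_conn W1 | exact: walk_conn W2].
Qed.

Definition root v := odflt v [pick x | connect adj x v && connect adj v x].

Lemma root_spec v : connect adj (root v) v && connect adj v (root v).
Proof. by rewrite /root; case: pickP => [x Hx|_] //=; rewrite connect0. Qed.

Lemma root_eq a b : connect adj a b -> connect adj b a -> root a = root b.
Proof.
move=> Hab Hba; rewrite /root.
have -> : [pick x | connect adj x a && connect adj a x] =
          [pick x | connect adj x b && connect adj b x].
  apply: eq_pick => x /=; apply/idP/idP => /andP[H1 H2]; apply/andP; split.
  - exact: connect_trans H1 Hab.
  - exact: connect_trans Hba H2.
  - exact: connect_trans H1 Hba.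
  - exact: connect_trans Hab H2.
case: pickP => [x _|H] //=; by move: (H b); rewrite connect0.
Qed.

Fixpoint allseqs n : seq (seq E) :=
  if n is n'.+1 then [::] :: [seq e :: s | e <- enum E, s <- allseqs n'] else [:: [::]].

Lemma allseqsP n s : (size s <= n)%N -> s \in allseqs n.
Proof.
elim: n s => [|n IH] [|e s] //=; rewrite ?inE ?eqxx //.
move=> Hs; apply/orP; right.
by apply: (allpairs_f (fun e s => e :: s)); rewrite ?mem_enum // IH.
Qed.

End Walks.

Lemma seqmin (T : eqType) (R : realFieldType) (f : T -> R) (l : seq T) x0 :
  x0 \in l -> exists2 m, m \in l & forall y, y \in l -> f m <= f y.
Proof.
elim: l x0 => [|a l IH] x0 //= _.
case: l IH => [|b l] IH.
  by exists a; rewrite ?mem_head // => y; rewrite inE => /eqP->.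
have [m Hm Hmin] := IH b (mem_head _ _).
case: (leP (f a) (f m)) => H.
  exists a; first exact: mem_head.
  move=> y; rewrite in_cons => /orP[/eqP->//|/Hmin]; exact: le_trans.
exists m; first by rewrite in_cons Hm orbT.
move=> y; rewrite in_cons => /orP[/eqP->|/Hmin//]; exact: ltW.
Qed.

Section Core.
Variables (V E : finType) (src tgt : E -> V).
Variable R : realFieldType.
Variable g : {ffun E -> int} -> R.
Notation MG := (in_MG src tgt).
Notation walk := (walk src tgt).
Notation adj := (adj src tgt).
Notation root := (root src tgt).
Hypothesis gadd : forall x y, MG x -> MG y -> g (x + y) = g x + g y.
Hypothesis gpos : forall C, simple_cycle src tgt C -> 0 <= g (cycle_vec C).

Lemma cw_ge0 x s : walk x s x -> 0 <= g (wvec s).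
Proof.
move/walk_cw => [L [HL ->]]; rewrite (gsum gadd); last by move=> C HC; exact: MGcyc (HL _ HC).
by rewrite big_seq; apply: sumr_ge0 => C HC; apply: gpos; apply: HL.
Qed.

Lemma shorten x s y Q : walk x s y -> walk y Q x -> exists s',
  [/\ walk x s' y, (size s' <= #|V|)%N & g (wvec (s' ++ Q)) <= g (wvec (s ++ Q))].
Proof.
move=> + WQ; move: {2}(size s) (leqnn (size s)) => n; elim: n s => [|n IH] s Hs W.
  by exists s; split => //; apply: leq_trans Hs _.
case: (leqP (size s) #|V|) => Hv; first by exists s.
have Hu : ~~ uniq (map src s).
  by apply/negP => /uniq_size_V; rewrite size_map leqNgt Hv.
have [A [B [C [z [Hs' W1 W2 H0 H1]]]]] := walk_cut W Hu.
have HAC : (size (A ++ C) <= n)%N.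
  move: Hs; rewrite Hs' !size_cat => Hs; rewrite -ltnS; apply: leq_trans Hs; lia.
have [s' [W' Hsz Hle]] := IH _ HAC W1.
exists s'; split => //; apply: le_trans Hle _.
have -> : wvec (s ++ Q) = wvec ((A ++ C) ++ Q) + wvec B.
  rewrite Hs' !wvec_cat; set a := wvec A; set b := wvec B; set c := wvec C; set q := wvec Q.
  by rewrite -!addrA; congr (_ + _); rewrite addrC -!addrA; congr (_ + _); rewrite addrC.
have WACQ : walk x ((A ++ C) ++ Q) x by apply/walk_catP; exists y; rewrite W1.
rewrite gadd; [|exact: cw_MG WACQ|exact: cw_MG W2].
by rewrite lerDl; apply: cw_ge0 W2.
Qed.


Lemma walk_map x s y : walk x s y -> map src s ++ [:: y] = x :: map tgt s.
Proof.
elim: s x => [|e s IH] x /=; first by move/eqP->.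
by case/andP=> /eqP-> /IH ->.
Qed.

Lemma wvec_sum1 (s : seq E) : \sum_(e <- s) wvec [:: e] = wvec s.
Proof.
elim: s => [|e s IH]; first by rewrite big_nil wvec_nil.
by rewrite big_cons IH -wvec_cat.
Qed.

Lemma adj_edge e : connect adj (src e) (tgt e).
Proof. by apply: connect1; apply/existsP; exists e; rewrite !eqxx. Qed.

Lemma core : exists u : E -> R, (forall e, 0 <= u e) /\
  forall C, simple_cycle src tgt C -> g (cycle_vec C) = \sum_(e <- C) u e.
Proof.
have HF : forall v, exists pq : seq E * seq E,
   [/\ walk (root v) pq.1 v, walk v pq.2 (root v) &
     forall P, walk (root v) P v -> g (wvec (pq.1 ++ pq.2)) <= g (wvec (P ++ pq.2))].
  move=> v; have /andP[H1 H2] := root_spec src tgt v.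
  have [Q WQ] := conn_walk H2; have [P0 WP0] := conn_walk H1.
  have [P0' [W0 S0 _]] := shorten WP0 WQ.
  set l := [seq P <- allseqs E #|V| | walk (root v) P v].
  have Hin : P0' \in l by rewrite mem_filter W0 allseqsP.
  have [m Hm Hmin] := seqmin (fun P => g (wvec (P ++ Q))) Hin.
  exists (m, Q); split => //=; first by move: Hm; rewrite mem_filter => /andP[].
  move=> P WP; have [P' [W' S' Hle]] := shorten WP WQ; apply: le_trans Hle.
  by apply: Hmin; rewrite mem_filter W' allseqsP.
have [F HFs] := fin_all_exists HF.
pose X e := wvec ((F (src e)).1 ++ e :: (F (tgt e)).2).
pose Y v := wvec ((F v).1 ++ (F v).2).
pose u e := if connect adj (tgt e) (src e) then g (X e) - g (Y (tgt e)) else 0.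
have Hroot : forall e, connect adj (tgt e) (src e) -> root (src e) = root (tgt e).
  by move=> e H; apply: root_eq => //; apply: adj_edge.
have XMG : forall e, connect adj (tgt e) (src e) -> MG (X e).
  move=> e H; have [W1 W2 _] := HFs (src e); have [W1' W2' _] := HFs (tgt e).
  apply: (@cw_MG _ _ src tgt (root (src e))); apply/walk_catP; exists (src e).
  by rewrite W1 /= eqxx (Hroot _ H) W2'.
have YMG : forall v, MG (Y v).
  move=> v; have [W1 W2 _] := HFs v; apply: (@cw_MG _ _ src tgt (root v)).
  by apply/walk_catP; exists v; rewrite W1 W2.
exists u; split.
  move=> e; rewrite /u; case: ifP => // Hc.
  have [W1 W2 Hm] := HFs (tgt e); have [W1' W2' _] := HFs (src e).
  rewrite subr_ge0.
  have : walk (root (tgt e)) ((F (src e)).1 ++ [:: e]) (tgt e).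
    by apply/walk_catP; exists (src e); rewrite -(Hroot _ Hc) W1' /= !eqxx.
  by move/Hm; rewrite -catA.
move=> C HC; have [c0 [C' [HCe W Hu]]] := simple_walk HC.
set x := src c0 in W.
have Hconn : forall e, e \in C -> connect adj (tgt e) (src e).
  move=> e He; have [H1 H2] := walk_mem W He; exact: connect_trans H2 H1.
rewrite (eq_big_seq (fun e => g (X e) - g (Y (tgt e)))); last first.
  by move=> e He; rewrite /u Hconn.
rewrite sumrB -[\sum_(i <- C) g (X i)](gsum gadd); last first.
  by move=> e He; apply: XMG; apply: Hconn.
rewrite -[\sum_(i <- C) g (Y (tgt i))](gsum gadd); last by move=> e _; apply: YMG.
set SY := \sum_(e <- C) Y (tgt e).
have -> : \sum_(e <- C) X e = SY + cycle_vec C.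
  have Hrot : forall h : V -> {ffun E -> int},
      \sum_(e <- C) h (tgt e) = \sum_(e <- C) h (src e).
    move=> h; rewrite -(big_map tgt predT h) -(big_map src predT h).
    have -> : map tgt C = rot 1 (map src C).
      have := walk_map W; rewrite HCe /= rot1_cons -cats1 => [[]] ->.
      by [].

    by apply: perm_big; rewrite perm_rot.
  rewrite /SY /X /Y.
  under eq_bigr do rewrite wvec_cat -cat1s wvec_cat.
  under [X in _ = X + _]eq_bigr do rewrite wvec_cat.
  rewrite !big_split /= (Hrot (fun v => wvec (F v).1)) wvec_sum1 wvec_uniq; last first.
    by move: Hu; apply: map_uniq.
  by rewrite -addrA [cycle_vec C + _]addrC addrA.
rewrite gadd; first by rewrite addrC addKr.
  by apply: MGsum => e _; apply: YMG.
exact: MGcyc.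
Qed.

End Core.

Lemma sum_cvec (E : finType) (R : realFieldType) (C : seq E) (h : E -> R) :
  uniq C -> \sum_e ((cycle_vec C e)%:~R : R) * h e = \sum_(e <- C) h e.
Proof.
move=> Hu; rewrite (big_uniq C Hu) [X in _ = X]big_mkcond /=; apply: eq_bigr => e _.
by rewrite ffunE; case: (e \in C) => /=; rewrite ?mul1r ?mul0r.
Qed.

Lemma sizeS (T : Type) (R : realFieldType) (s : seq T) : \sum_(e <- s) (1 : R) = (size s)%:R.
Proof. elim: s => [|a s IH]; by rewrite ?big_nil ?big_cons ?IH //= -add1n natrD. Qed.

Theorem mainTheorem12 (R : realFieldType) (V E : finType) (src tgt : E -> V)
  (c : {ffun E -> int} -> R)
  (c_add : forall x y, in_MG src tgt x -> in_MG src tgt y -> c (x + y) = c x + c y)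
  (c_cyc : forall s, simple_cycle src tgt s -> - (size s)%:R < c (cycle_vec s)) :
  exists w : E -> R,
    (forall e, -1 < w e) /\
    (forall x, in_MG src tgt x -> c x = \sum_(e : E) (x e)%:~R * w e).
Proof.
have Hsz : forall C, simple_cycle src tgt C -> (0 < size C)%N /\ C \in [seq C <- allseqs E #|V| | simple_cycle src tgt C].
  move=> C HC; have [c0 [C' [HCe W Hu]]] := simple_walk HC; split; first by rewrite HCe.
  by rewrite mem_filter HC allseqsP // -(size_map src) uniq_size_V.
have [eps [Heps Hle]] : exists eps : R, 0 < eps /\ forall C, simple_cycle src tgt C ->
    eps * (size C)%:R <= c (cycle_vec C) + (size C)%:R.
  case HL: [seq C <- allseqs E #|V| | simple_cycle src tgt C] => [|C0 L'].
    by exists 1; split => // C HC; have [_] := Hsz C HC; rewrite HL.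
  pose f C := (c (cycle_vec C) + (size C)%:R) / (size C)%:R.
  have [m Hm Hmin] := seqmin f (mem_head C0 L').
  have Hms : simple_cycle src tgt m by move: Hm; rewrite -HL mem_filter => /andP[].
  have [Hm0 _] := Hsz m Hms.
  exists (f m); split.
    apply: divr_gt0; last by rewrite ltr0n.
    have := c_cyc m Hms; lra.
  move=> C HC; have [HC0 HCin] := Hsz C HC.
  rewrite -ler_pdivlMr ?ltr0n //; apply: Hmin; by rewrite -HL.
pose k := 1 - eps.
pose S (x : {ffun E -> int}) : R := \sum_e (x e)%:~R.
have SD : forall x y, S (x + y) = S x + S y.
  by move=> x y; rewrite /S -big_split; apply: eq_bigr => e _; rewrite ffunE intrD.
pose g x := c x + k * S x.
have gadd : forall x y, in_MG src tgt x -> in_MG src tgt y -> g (x + y) = g x + g y.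
  by move=> x y Hx Hy; rewrite /g c_add // SD mulrDr addrACA.
have Scv : forall C, uniq C -> S (cycle_vec C) = (size C)%:R.
  move=> C Hu; rewrite -sizeS -(sum_cvec (fun _ => 1) Hu) /S.
  by apply: eq_bigr => e _; rewrite mulr1.
have gpos : forall C, simple_cycle src tgt C -> 0 <= g (cycle_vec C).
  move=> C HC; have [c0 [C' [HCe W Hu]]] := simple_walk HC.
  rewrite /g Scv ?(map_uniq Hu) // /k mulrBl mul1r.
  have := Hle C HC; lra.
have [u [Hu0 Hu]] := core gadd gpos.
exists (fun e => u e - k); split.
  move=> e; have := Hu0 e; rewrite /k; lra.
pose Lin (x : {ffun E -> int}) := \sum_e (x e)%:~R * (u e - k).
have LD : forall x y, Lin (x + y) = Lin x + Lin y.
  by move=> x y; rewrite /Lin -big_split; apply: eq_bigr => e _; rewrite ffunE intrD mulrDl.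
have L0 : Lin 0 = 0.
  by rewrite /Lin big1 // => e _; rewrite ffunE mul0r.
have Lz : forall x n, Lin (x *~ n) = Lin x *~ n.
  move=> x n; rewrite /Lin mulrz_suml; apply: eq_bigr => e _.
  by rewrite ffunMzE mulrzz intrM mulrAC mulrzr.
have Hcyc : forall C, simple_cycle src tgt C -> c (cycle_vec C) = Lin (cycle_vec C).
  move=> C HC; have [c0 [C' [HCe W Hv]]] := simple_walk HC.
  have Hg := Hu C HC; rewrite -(sum_cvec u (map_uniq Hv)) in Hg.
  have -> : Lin (cycle_vec C) = g (cycle_vec C) - k * S (cycle_vec C).
    rewrite Hg /Lin /S mulr_sumr -sumrB; apply: eq_bigr => e _; rewrite mulrBr; congr (_ - _).
    by rewrite mulrC.
  rewrite /g; lra.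
move=> x [l [Hl ->]].
rewrite (gsum c_add); last first.
  by move=> p Hp; apply: MGz; apply: MGcyc; move/allP: Hl => /(_ p Hp).
have -> : \sum_e ((\sum_(p <- l) cycle_vec p.2 *~ p.1) e)%:~R * (u e - k)
        = Lin (\sum_(p <- l) cycle_vec p.2 *~ p.1) by [].
elim: l Hl => [|p l IH] Hl; first by rewrite !big_nil L0.
move/andP: Hl => [Hp Hl].
rewrite !big_cons LD IH // Lz (gz c_add) ?Hcyc //; exact: MGcyc.
Qed.
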